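(* Let $\mu$ be a translation invariant probability measure on $X=\{0,1\}^{\mathbb{Z}}$ with finite total entropy $S(\mu)=\lim_{j\to\infty}S(\pi_j\mu)<\infty$. Then $\mu$ is a PC measure, i.e. $\mu$ is supported on the (countable) set of periodic configurations.
   Context: $\pi_j\mu$ is the marginal of $\mu$ on the coordinates $0,\ldots,j$, and $S(\nu)=-\sum_q\nu(q)\log\nu(q)$ is the Gibbs–Shannon entropy of a measure on a finite set; the limit defining the total entropy exists since $S(\pi_j\mu)$ is nondecreasing in $j$. *)

(* Defs.v *)
From Stdlib Require Import Reals ZArith List.
Open Scope R_scope.

Definition config := Z -> bool.

(* Borel sigma-algebra: generated by the one-coordinate cylinders *)
Inductive measurable : (config -> Prop) -> Prop :=
| meas_cyl : forall (i : Z) (b : bool), measurable (fun x => x i = b)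
| meas_compl : forall A, measurable A -> measurable (fun x => ~ A x)
| meas_union : forall A : nat -> config -> Prop,
    (forall n, measurable (A n)) -> measurable (fun x => exists n, A n x).

(* probability measure on the Borel sets (values outside measurable sets are irrelevant) *)
Definition is_prob_measure (mu : (config -> Prop) -> R) : Prop :=
  (forall A, measurable A -> 0 <= mu A) /\
  mu (fun _ => True) = 1 /\
  (forall A : nat -> config -> Prop,
      (forall n, measurable (A n)) ->
      (forall m n x, m <> n -> A m x -> A n x -> False) ->
      infinite_sum (fun n => mu (A n)) (mu (fun x => exists n, A n x))).

Definition shift (x : config) : config := fun i => x (i + 1)%Z.

Definition translation_invariant (mu : (config -> Prop) -> R) : Prop :=
  forall A, measurable A -> mu (fun x => A (shift x)) = mu A.

Fixpoint words (n : nat) : list (list bool) :=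
  match n with
  | O => nil :: nil
  | S n' => map (cons false) (words n') ++ map (cons true) (words n')
  end.

Definition cyl (w : list bool) : config -> Prop :=
  fun x => forall i : nat, (i < length w)%nat -> x (Z.of_nat i) = nth i w false.

(* pi_j mu, the marginal on coordinates 0..j, evaluated at the word q *)
Definition marginal (mu : (config -> Prop) -> R) (j : nat) (q : list bool) : R :=
  mu (cyl q).

Definition xlogx (t : R) : R := if Req_EM_T t 0 then 0 else t * ln t.

Definition entropy_j (mu : (config -> Prop) -> R) (j : nat) : R :=
  - fold_right Rplus 0 (map (fun q => xlogx (marginal mu j q)) (words (S j))).

Definition periodic_configs : config -> Prop :=
  fun x => exists p : Z, (0 < p)%Z /\ forall n : Z, x (n + p)%Z = x n.

(* Main.v *)
Require Import Defs.
From Stdlib Require Import Reals ZArith List Lra Lia Classical FunctionalExtensionality PropExtensionality.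
Open Scope R_scope.

Lemma set_ext (A B : config -> Prop) : (forall x, A x <-> B x) -> A = B.
Proof. intro H; apply functional_extensionality; intro x; apply propositional_extensionality; auto. Qed.

Lemma meas_ext A B : measurable A -> (forall x, A x <-> B x) -> measurable B.
Proof. intros HA H; rewrite <- (set_ext A B H); exact HA. Qed.

Lemma mu_ext (mu : (config -> Prop) -> R) A B : (forall x, A x <-> B x) -> mu A = mu B.
Proof. intro H; rewrite (set_ext A B H); reflexivity. Qed.

Lemma meas_True : measurable (fun _ => True).
Proof.
  apply meas_ext with (fun x => exists n : nat, (match n with O => fun y : config => y 0%Z = true | _ => fun y => ~ y 0%Z = true end) x).
  - apply meas_union; intros [|n]; [apply meas_cyl| apply meas_compl, meas_cyl].
  - intro x; split; [auto|intros _]. destruct (classic (x 0%Z = true)).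
    + exists O; auto. + exists 1%nat; auto.
Qed.

Lemma meas_empty : measurable (fun _ => False).
Proof. apply meas_ext with (fun x => ~ True). apply meas_compl, meas_True. intuition. Qed.

Lemma meas_or A B : measurable A -> measurable B -> measurable (fun x => A x \/ B x).
Proof.
  intros HA HB.
  apply meas_ext with (fun x => exists n : nat, (match n with O => A | 1%nat => B | _ => fun _ => False end) x).
  - apply meas_union; intros [|[|n]]; auto; apply meas_empty.
  - intro x; split.
    + intros [[|[|n]] H]; auto; contradiction.
    + intros [H|H]; [exists O|exists 1%nat]; auto.
Qed.

Lemma meas_and A B : measurable A -> measurable B -> measurable (fun x => A x /\ B x).
Proof.
  intros HA HB. apply meas_ext with (fun x => ~ (~ A x \/ ~ B x)).
  - apply meas_compl, meas_or; apply meas_compl; auto.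
  - intro x; tauto.
Qed.

Lemma meas_forall_nat (A : nat -> config -> Prop) : (forall n, measurable (A n)) -> measurable (fun x => forall n, A n x).
Proof.
  intros HA. apply meas_ext with (fun x => ~ exists n, ~ A n x).
  - apply meas_compl, meas_union; intro n; apply meas_compl; auto.
  - intro x; split.
    + intros H n; apply NNPP; intro H'; apply H; eauto.
    + intros H [n Hn]; auto.
Qed.

Lemma meas_exists_nat (A : nat -> config -> Prop) : (forall n, measurable (A n)) -> measurable (fun x => exists n, A n x).
Proof. apply meas_union. Qed.

Lemma meas_forall_Z (A : Z -> config -> Prop) : (forall n, measurable (A n)) -> measurable (fun x => forall n, A n x).
Proof.
  intros HA. apply meas_ext with (fun x => forall n:nat, A (Z.of_nat n) x /\ A (- Z.of_nat n)%Z x).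
  - apply meas_forall_nat; intro; apply meas_and; auto.
  - intro x; split; [|intros H n; split; auto].
    intros H z. destruct (Z_le_gt_dec 0 z).
    + replace z with (Z.of_nat (Z.to_nat z)) by lia. apply H.
    + replace z with (- Z.of_nat (Z.to_nat (-z)))%Z by lia. apply H.
Qed.

Lemma meas_prop_and (P : Prop) A : measurable A -> measurable (fun x => P /\ A x).
Proof.
  intro HA. destruct (classic P).
  - apply meas_ext with A; auto. intuition.
  - apply meas_ext with (fun _ => False). apply meas_empty. intuition.
Qed.

Lemma meas_prop_imp (P : Prop) A : measurable A -> measurable (fun x => P -> A x).
Proof.
  intro HA. destruct (classic P).
  - apply meas_ext with A; auto. intuition.
  - apply meas_ext with (fun _ => True). apply meas_True. intuition.
Qed.

Lemma meas_eq_at i j : measurable (fun x : config => x i = x j).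
Proof.
  apply meas_ext with (fun x : config => (x i = true /\ x j = true) \/ (x i = false /\ x j = false)).
  - apply meas_or; apply meas_and; apply meas_cyl.
  - intro x; destruct (x i), (x j); intuition congruence.
Qed.

Lemma meas_comp A (g : Z -> Z) : measurable A -> measurable (fun x : config => A (fun i => x (g i))).
Proof.
  intro HA; induction HA.
  - apply (meas_cyl (g i) b).
  - apply meas_compl; auto.
  - apply meas_union with (A := fun n x => A n (fun i => x (g i))); auto.
Qed.

Lemma meas_list (l : list (list bool)) (F : list bool -> config -> Prop) :
  (forall w, measurable (F w)) -> measurable (fun x => exists w, In w l /\ F w x).
Proof.
  intro HF; induction l as [|a l IH].
  - apply meas_ext with (fun _ => False). apply meas_empty. intro x; split; [tauto|]. intros [w [[] _]].
  - apply meas_ext with (fun x => F a x \/ exists w, In w l /\ F w x).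
    + apply meas_or; auto.
    + intro x; split.
      * intros [H|[w [H1 H2]]]; [exists a; simpl; auto| exists w; simpl; auto].
      * intros [w [[H1|H1] H2]]; [subst; auto| right; eauto].
Qed.

Lemma meas_periodic : measurable periodic_configs.
Proof.
  apply meas_ext with (fun x => exists k : nat, forall n : Z, x (n + Z.of_nat (S k))%Z = x n).
  - apply meas_exists_nat; intro k. apply meas_forall_Z with (A := fun n x => x (n + Z.of_nat (S k))%Z = x n).
    intro; apply meas_eq_at.
  - intro x; split.
    + intros [k Hk]; exists (Z.of_nat (S k)); split; [lia|auto].
    + intros [p [Hp H]]. exists (Z.to_nat p - 1)%nat. replace (Z.of_nat (S (Z.to_nat p - 1))) with p by lia. auto.
Qed.

Lemma meas_cylw (w : list bool) (g : nat -> Z) : measurable (fun x : config => forall i : nat, (i < length w)%nat -> x (g i) = nth i w false).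
Proof.
  apply meas_forall_nat with (A := fun i x => (i < length w)%nat -> x (g i) = nth i w false).
  intro i; apply meas_prop_imp, meas_cyl.
Qed.

Lemma mu_empty mu : is_prob_measure mu -> mu (fun _ => False) = 0.
Proof.
  intros [H0 [H1 H2]].
  assert (Hs := H2 (fun _ _ => False) (fun _ => meas_empty) (fun m n x _ h _ => h)).
  simpl in Hs.
  rewrite (mu_ext mu (fun x => exists _ : nat, False) (fun _ => False)) in Hs by (intro; split; [intros [_ h]; exact h| tauto]).
  set (a := mu (fun _ => False)) in *.
  destruct (Req_dec a 0) as [|Ha]; auto. exfalso.
  destruct (Hs (Rabs a / 2)) as [N HN]. { assert (Rabs a > 0) by (apply Rabs_pos_lt; auto). lra. }
  assert (E1 := HN N (le_n _)). assert (E2 := HN (S N) (le_S _ _ (le_n _))).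
  simpl in E2. unfold R_dist in *.
  assert (Rabs a <= Rabs (sum_f_R0 (fun _ => a) N + a - a) + Rabs (sum_f_R0 (fun _ => a) N - a)).
  { replace a with ((sum_f_R0 (fun _ => a) N + a - a) - (sum_f_R0 (fun _ => a) N - a)) at 1 by ring.
    unfold Rminus at 1; eapply Rle_trans; [apply Rabs_triang|]; rewrite Rabs_Ropp; lra. }
  lra.
Qed.

Lemma mu_add mu A B : is_prob_measure mu -> measurable A -> measurable B ->
  (forall x, A x -> B x -> False) -> mu (fun x => A x \/ B x) = mu A + mu B.
Proof.
  intros Hmu HA HB Hd. destruct Hmu as [H0 [H1 H2]].
  set (F := fun n : nat => match n with O => A | 1%nat => B | _ => fun _ : config => False end).
  assert (HF : forall n, measurable (F n)) by (intros [|[|n]]; simpl; auto; apply meas_empty).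
  assert (Hd' : forall m n x, m <> n -> F m x -> F n x -> False).
  { intros [|[|m]] [|[|n]] x Hmn; simpl; try tauto; try lia; intros; eauto. }
  assert (Hs := H2 F HF Hd').
  rewrite (mu_ext mu (fun x => exists n, F n x) (fun x => A x \/ B x)) in Hs.
  2:{ intro x; split. intros [[|[|n]] h]; simpl in h; tauto. intros [h|h]; [exists O|exists 1%nat]; auto. }
  assert (Hpart : forall n, sum_f_R0 (fun n => mu (F n)) (S n) = mu A + mu B).
  { induction n. simpl; ring. simpl in *. rewrite IHn. rewrite mu_empty by (split; auto). ring. }
  apply (uniqueness_sum (fun n => mu (F n))); auto.
  intros eps He. exists 1%nat. intros [|n] Hn; [lia|]. rewrite Hpart. unfold R_dist. rewrite Rminus_diag, Rabs_R0. auto.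
Qed.

Lemma mu_ge0 mu A : is_prob_measure mu -> measurable A -> 0 <= mu A.
Proof. intros [H _]; auto. Qed.

Lemma mu_True mu : is_prob_measure mu -> mu (fun _ => True) = 1.
Proof. intros [_ [H _]]; auto. Qed.

Lemma mu_compl mu A : is_prob_measure mu -> measurable A -> mu A + mu (fun x => ~ A x) = 1.
Proof.
  intros Hmu HA. rewrite <- mu_add; auto. 2: apply meas_compl; auto.
  rewrite <- (mu_True mu Hmu). apply mu_ext. intro x; tauto.
Qed.

Lemma mu_mono mu A B : is_prob_measure mu -> measurable A -> measurable B ->
  (forall x, B x -> A x) -> mu B <= mu A.
Proof.
  intros Hmu HA HB Hs.
  rewrite (mu_ext mu A (fun x => B x \/ (A x /\ ~ B x))).
  2: intro x; split; [intro; destruct (classic (B x)); auto | intros [h|[h _]]; auto].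
  rewrite mu_add; auto. 2: apply meas_and; auto; apply meas_compl; auto. 2: tauto.
  assert (0 <= mu (fun x => A x /\ ~ B x)) by (apply mu_ge0; auto; apply meas_and; auto; apply meas_compl; auto).
  lra.
Qed.

Lemma mu_le1 mu A : is_prob_measure mu -> measurable A -> mu A <= 1.
Proof. intros Hmu HA. rewrite <- (mu_True mu Hmu). apply mu_mono; auto. apply meas_True. Qed.

Lemma mu_pos_nonempty mu A : is_prob_measure mu -> 0 < mu A -> exists x, A x.
Proof.
  intros Hmu H. apply NNPP; intro Hn.
  rewrite (mu_ext mu A (fun _ => False)) in H. rewrite mu_empty in H; auto; lra.
  intro x; split; [intro; apply Hn; eauto| tauto].
Qed.

Lemma decr_le (A : nat -> config -> Prop) : (forall m x, A (S m) x -> A m x) ->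
  forall j k x, (j <= k)%nat -> A k x -> A j x.
Proof. intros Hd j k x Hjk; induction Hjk; auto. Qed.

Lemma mu_cont_down mu (A : nat -> config -> Prop) c : is_prob_measure mu ->
  (forall m, measurable (A m)) -> (forall m x, A (S m) x -> A m x) ->
  (forall m, c <= mu (A m)) -> c <= mu (fun x => forall m, A m x).
Proof.
  intros Hmu HA Hd Hc.
  set (I := fun x => forall m, A m x).
  assert (HI : measurable I) by (apply meas_forall_nat; auto).
  set (D := fun k x => A k x /\ ~ A (S k) x).
  assert (HD : forall k, measurable (D k)) by (intro; apply meas_and; auto; apply meas_compl; auto).
  assert (Hdisj : forall m n x, m <> n -> D m x -> D n x -> False).
  { intros m n x Hmn [h1 h2] [h3 h4].
    destruct (Nat.lt_ge_cases m n).
    - apply h2; apply (decr_le A Hd (S m) n); auto.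
    - assert (n < m)%nat by lia. apply h4; apply (decr_le A Hd (S n) m); auto. }
  destruct Hmu as [H0 [H1 H2]]. assert (Hmu : is_prob_measure mu) by (split; auto).
  assert (Hs := H2 D HD Hdisj).
  assert (HU : mu (fun x => exists n, D n x) = mu (A 0%nat) - mu I).
  { assert (E : mu (A 0%nat) = mu (fun x => (exists n, D n x) \/ I x)).
    { apply mu_ext. intro x; split.
      - intro h0. destruct (classic (I x)) as [hi|hi]; [right; auto|left].
        apply not_all_ex_not in hi. destruct hi as [m hm].
        assert (forall m, ~ A m x -> exists n, D n x).
        { induction m0; intro hn. contradiction. destruct (classic (A m0 x)). exists m0; split; auto. auto. }
        eauto.
      - intros [[n [h _]]|h]. apply (decr_le A Hd 0 n); auto; lia. apply h. }
    rewrite E, mu_add; auto. ring. apply meas_union; auto.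
    intros x [n [_ hn]] hi. apply hn, hi. }
  rewrite HU in Hs.
  assert (Hpart : forall n, sum_f_R0 (fun k => mu (D k)) n = mu (A 0%nat) - mu (A (S n))).
  { assert (Hk : forall k, mu (D k) = mu (A k) - mu (A (S k))).
    { intro k. rewrite (mu_ext mu (A k) (fun x => A (S k) x \/ D k x)).
      rewrite mu_add; auto. ring. intros x h [_ h']; auto.
      intro x; split. intro h; destruct (classic (A (S k) x)); [left|right; split]; auto.
      intros [h|[h _]]; auto. }
    induction n; simpl; rewrite Hk; try rewrite IHn; ring. }
  apply Rnot_lt_le; intro Hlt.
  destruct (Hs (c - mu I)) as [N HN]; [lra|].
  assert (HNN := HN N (le_n _)). rewrite Hpart in HNN. unfold R_dist in HNN.
  assert (Hc' := Hc (S N)).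
  apply Rabs_def2 in HNN. lra.
Qed.

Lemma inf_sum_ge_contra (s : nat -> R) l c : 0 < c -> (forall n, c <= s n) -> infinite_sum s l -> False.
Proof.
  intros Hc Hs Hl.
  destruct (Hl 1) as [N HN]; [lra|].
  destruct (archimed ((Rabs l + 2) / c)) as [Hu _].
  set (n := (N + Z.to_nat (up ((Rabs l + 2) / c)))%nat).
  assert (Hb : forall k, INR (S k) * c <= sum_f_R0 s k).
  { induction k. simpl. rewrite Rmult_1_l; auto. rewrite (S_INR (S k)). change (sum_f_R0 s (S k)) with (sum_f_R0 s k + s (S k)). specialize (Hs (S k)). lra. }
  assert (H1 := HN n ltac:(unfold n; lia)). unfold R_dist in H1.
  assert (H2 := Hb n).
  assert (INR (S n) > (Rabs l + 2) / c).
  { assert (IZR (up ((Rabs l + 2) / c)) <= INR (S n)).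
    { rewrite INR_IZR_INZ. apply IZR_le. unfold n. destruct (Z_le_gt_dec 0 (up ((Rabs l + 2) / c))); lia. }
    lra. }
  assert (INR (S n) * c > Rabs l + 2).
  { apply Rmult_gt_compat_r with (r := c) in H; auto. unfold Rdiv in H. rewrite Rmult_assoc, Rinv_l, Rmult_1_r in H; lra. }
  assert (Habs := Rle_abs l). apply Rabs_def2 in H1. lra.
Qed.

Definition sumL {T} (f : T -> R) (l : list T) := fold_right Rplus 0 (map f l).

Lemma sumL_app {T} (f : T -> R) l1 l2 : sumL f (l1 ++ l2) = sumL f l1 + sumL f l2.
Proof. unfold sumL; induction l1; simpl; [ring| rewrite IHl1; ring]. Qed.

Lemma sumL_map {T U} (f : U -> R) (g : T -> U) l : sumL f (map g l) = sumL (fun x => f (g x)) l.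
Proof. unfold sumL; rewrite map_map; reflexivity. Qed.

Lemma sumL_ext {T} (f g : T -> R) l : (forall x, In x l -> f x = g x) -> sumL f l = sumL g l.
Proof. unfold sumL; intro H; f_equal; apply map_ext_in; auto. Qed.

Lemma sumL_le {T} (f g : T -> R) l : (forall x, In x l -> f x <= g x) -> sumL f l <= sumL g l.
Proof. unfold sumL; induction l; simpl; intros; [lra|]. assert (f a <= g a) by auto. assert (fold_right Rplus 0 (map f l) <= fold_right Rplus 0 (map g l)) by auto. lra. Qed.

Lemma sumL_add {T} (f g : T -> R) l : sumL (fun x => f x + g x) l = sumL f l + sumL g l.
Proof. unfold sumL; induction l; simpl; [ring| rewrite IHl; ring]. Qed.

Lemma sumL_scal {T} (f : T -> R) c l : sumL (fun x => c * f x) l = c * sumL f l.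
Proof. unfold sumL; induction l; simpl; [ring| rewrite IHl; ring]. Qed.

Lemma words_length n w : In w (words n) -> length w = n.
Proof.
  revert w; induction n; simpl; intros w H.
  - destruct H as [<-|[]]; auto.
  - apply in_app_or in H; destruct H as [H|H]; apply in_map_iff in H; destruct H as [v [<- Hv]]; simpl; auto.
Qed.

Lemma words_in w : In w (words (length w)).
Proof.
  induction w as [|b w IH]; simpl; auto.
  apply in_or_app. destruct b; [right|left]; apply in_map; auto.
Qed.

Definition cylk (k : nat) (w : list bool) : config -> Prop :=
  fun x => forall i : nat, (i < length w)%nat -> x (Z.of_nat (k + i)) = nth i w false.

Lemma cylk_cons k b w x : cylk k (b :: w) x <-> x (Z.of_nat k) = b /\ cylk (S k) w x.
Proof.
  unfold cylk; simpl; split.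
  - intro H; split.
    + rewrite <- (H 0%nat) by lia. f_equal; lia.
    + intros i Hi. rewrite <- (H (S i)) by lia. f_equal; lia.
  - intros [H1 H2] [|i] Hi.
    + rewrite <- H1; f_equal; lia.
    + rewrite <- H2 by lia. f_equal; lia.
Qed.

Lemma meas_cylk k w : measurable (cylk k w).
Proof. apply (meas_cylw w (fun i => Z.of_nat (k + i))). Qed.

Lemma decomp mu : is_prob_measure mu -> forall n k A, measurable A ->
  sumL (fun w => mu (fun x => cylk k w x /\ A x)) (words n) = mu A.
Proof.
  intros Hmu n; induction n; intros k A HA.
  - unfold sumL; simpl. rewrite Rplus_0_r. apply mu_ext. intro x; unfold cylk; simpl; split; [tauto|split; auto; intros; lia].
  - simpl. rewrite sumL_app, !sumL_map.
    rewrite (sumL_ext _ (fun w => mu (fun x => cylk (S k) w x /\ (x (Z.of_nat k) = false /\ A x)))).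
    2:{ intros w _. apply mu_ext; intro x; rewrite cylk_cons; tauto. }
    rewrite (sumL_ext (fun x => mu (fun x0 => cylk k (true :: x) x0 /\ A x0)) (fun w => mu (fun x => cylk (S k) w x /\ (x (Z.of_nat k) = true /\ A x)))).
    2:{ intros w _. apply mu_ext; intro x; rewrite cylk_cons; tauto. }
    rewrite !IHn by (apply meas_and; auto; apply meas_cyl).
    rewrite <- mu_add; auto; try (apply meas_and; auto; apply meas_cyl).
    + apply mu_ext; intro x; destruct (x (Z.of_nat k)); intuition congruence.
    + intros x [h1 _] [h2 _]; congruence.
Qed.

Lemma perword p q L c : 0 <= q -> q <= p -> p <= 1 -> 0 < L -> q < c ->
  q <= (/ L * -1) * xlogx p + (c / exp (- L)) * p.
Proof.
  intros Hq Hqp Hp1 HL Hqc. set (a := exp (-L)). assert (Ha : 0 < a) by apply exp_pos.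
  unfold xlogx. destruct (Req_EM_T p 0) as [->|Hp0].
  - assert (q = 0) by lra. subst. unfold Rdiv. lra.
  - assert (Hp : 0 < p) by lra.
    destruct (Rle_lt_dec a p) as [Hap|Hpa].
    + assert (ln p <= 0). { destruct (Rle_lt_or_eq_dec _ _ Hp1) as [h|h]. rewrite <- ln_1. left; apply ln_increasing; auto. subst; rewrite ln_1; lra. }
      assert (0 <= (/ L * -1) * (p * ln p)).
      { assert (0 < / L) by (apply Rinv_0_lt_compat; auto).
        assert (0 <= p * - ln p) by (apply Rmult_le_pos; lra). nra. }
      assert (c <= c / a * p).
      { unfold Rdiv. replace c with (c * / a * a) at 1 by (field; lra).
        apply Rmult_le_compat_l; auto. apply Rmult_le_pos; [lra| left; apply Rinv_0_lt_compat; auto]. }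
      lra.
    + assert (ln p < - L). { unfold a in Hpa. rewrite <- (ln_exp (-L)). apply ln_increasing; auto. }
      assert (q * L <= p * - ln p) by nra.
      assert (q <= (/ L * -1) * (p * ln p)).
      { apply Rmult_le_reg_l with L; auto. replace (L * ((/ L * -1) * (p * ln p))) with (p * - ln p) by (field; lra). lra. }
      assert (0 <= c / a * p). { unfold Rdiv. apply Rmult_le_pos; [apply Rmult_le_pos|]; try lra. left; apply Rinv_0_lt_compat; auto. }
      lra.
Qed.

Lemma entropy_good mu N B : is_prob_measure mu -> measurable N -> 0 < mu N ->
  (forall j, entropy_j mu j <= B) ->
  exists c, 0 < c /\ forall j, exists w, In w (words (S j)) /\ c <= mu (fun x => cyl w x /\ N x).
Proof.
  intros Hmu HN Heta HB. set (eta := mu N) in *.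
  set (B' := Rabs B + 1). assert (HB' : 0 < B') by (unfold B'; assert (0 <= Rabs B) by apply Rabs_pos; lra).
  set (L := 4 * B' / eta). assert (HL : 0 < L) by (unfold L, Rdiv; apply Rmult_lt_0_compat; [lra| apply Rinv_0_lt_compat; auto]).
  set (a := exp (- L)). assert (Ha : 0 < a) by apply exp_pos.
  exists (a * eta / 4). split. { unfold Rdiv; apply Rmult_lt_0_compat; [apply Rmult_lt_0_compat|]; lra. }
  intro j. apply NNPP; intro Hno.
  assert (Hall : forall w, In w (words (S j)) -> mu (fun x => cyl w x /\ N x) < a * eta / 4).
  { intros w Hw. apply Rnot_le_lt. intro h. apply Hno; eauto. }
  set (W := words (S j)).
  assert (Hq : sumL (fun w => mu (fun x => cyl w x /\ N x)) W = eta) by (apply (decomp mu Hmu (S j) 0 N HN)).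
  assert (Hp : sumL (fun w => mu (cyl w)) W = 1).
  { rewrite <- (mu_True mu Hmu). rewrite <- (decomp mu Hmu (S j) 0 (fun _ => True) meas_True).
    apply sumL_ext; intros w _; apply mu_ext; intro x; unfold cylk, cyl; simpl; tauto. }
  assert (HE : entropy_j mu j = - sumL (fun w => xlogx (mu (cyl w))) W) by reflexivity.
  assert (Hle : sumL (fun w => mu (fun x => cyl w x /\ N x)) W <=
     sumL (fun w => (/ L * -1) * xlogx (mu (cyl w)) + (a * eta / 4 / exp (- L)) * mu (cyl w)) W).
  { apply sumL_le; intros w Hw. apply perword; auto.
    - apply mu_ge0; auto. apply meas_and; auto. apply meas_cylw.
    - apply mu_mono; auto. apply meas_cylw. apply meas_and; auto. apply meas_cylw. tauto.
    - apply mu_le1; auto. apply meas_cylw. }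
  rewrite sumL_add, !sumL_scal, Hq, Hp in Hle.
  assert (HBj := HB j). rewrite HE in HBj.
  assert (B <= B') by (unfold B'; assert (B <= Rabs B) by apply Rle_abs; lra).
  assert (/ L * -1 * sumL (fun w => xlogx (mu (cyl w))) W <= / L * B').
  { replace (/ L * -1 * sumL (fun w => xlogx (mu (cyl w))) W) with (/ L * (- sumL (fun w => xlogx (mu (cyl w))) W)) by ring.
    apply Rmult_le_compat_l; [left; apply Rinv_0_lt_compat; auto| lra]. }
  assert (/ L * B' = eta / 4) by (unfold L; field; lra).
  assert (a * eta / 4 / exp (- L) * 1 = eta / 4) by (fold a; field; lra).
  lra.
Qed.

Definition shiftn (m : nat) (x : config) : config := fun i => x (i + Z.of_nat m)%Z.

Lemma mu_shiftn mu : is_prob_measure mu -> translation_invariant mu ->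
  forall m A, measurable A -> mu (fun x => A (shiftn m x)) = mu A.
Proof.
  intros Hmu HT m; induction m; intros A HA.
  - apply mu_ext; intro x. assert (E : shiftn 0%nat x = x).
    { apply functional_extensionality; intro i; unfold shiftn; f_equal; lia. }
    rewrite E; tauto.
  - rewrite <- (IHm A HA). rewrite <- (HT (fun x => A (shiftn m x))).
    + apply mu_ext; intro x. assert (E : shiftn (S m) x = shiftn m (Defs.shift x)).
      { apply functional_extensionality; intro i; unfold shiftn, Defs.shift; f_equal; lia. }
      unfold translation_invariant in *. simpl. rewrite E; tauto.
    + apply (meas_comp A (fun i => (i + Z.of_nat m)%Z) HA).
Qed.

Lemma periodic_shift x k : periodic_configs (fun i => x (i + k)%Z) <-> periodic_configs x.
Proof.
  unfold periodic_configs; split; intros [p [Hp H]]; exists p; split; auto; intro n.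
  - specialize (H (n - k)%Z). replace (n - k + p + k)%Z with (n + p)%Z in H by lia.
    replace (n - k + k)%Z with n in H by lia. auto.
  - replace (n + p + k)%Z with ((n + k) + p)%Z by lia. auto.
Qed.

Definition win (m : nat) (w : list bool) : config -> Prop :=
  fun x => forall i : nat, (i < length w)%nat -> x (Z.of_nat i - Z.of_nat m)%Z = nth i w false.

Lemma meas_win m w : measurable (win m w).
Proof. apply (meas_cylw w (fun i => (Z.of_nat i - Z.of_nat m)%Z)). Qed.

Lemma mu_win mu : is_prob_measure mu -> translation_invariant mu -> forall m w,
  mu (fun x => win m w x /\ ~ periodic_configs x) = mu (fun x => cyl w x /\ ~ periodic_configs x).
Proof.
  intros Hmu HT m w. rewrite <- (mu_shiftn mu Hmu HT m).
  - apply mu_ext; intro x. unfold shiftn, win, cyl. rewrite (periodic_shift x (Z.of_nat m)).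
    split; intros [H1 H2]; split; auto; intros i Hi; rewrite <- H1 by auto; f_equal; lia.
  - apply meas_and. apply meas_win. apply meas_compl, meas_periodic.
Qed.

Definition readw (m : nat) (x : config) : list bool :=
  map (fun i => x (Z.of_nat i - Z.of_nat m)%Z) (seq 0 (S (2 * m))).

Lemma readw_length m x : length (readw m x) = S (2 * m).
Proof. unfold readw; rewrite length_map, length_seq; auto. Qed.

Lemma nth_readw m x i : (i < S (2 * m))%nat -> nth i (readw m x) false = x (Z.of_nat i - Z.of_nat m)%Z.
Proof.
  intro Hi. unfold readw.
  rewrite (nth_indep _ false (x (Z.of_nat 0 - Z.of_nat m)%Z)) by (rewrite length_map, length_seq; auto).
  rewrite (map_nth (fun i => x (Z.of_nat i - Z.of_nat m)%Z)). rewrite seq_nth by auto. reflexivity.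
Qed.

Lemma win_readw m x y : win m (readw m x) y <-> forall i : nat, (i < S (2 * m))%nat -> y (Z.of_nat i - Z.of_nat m)%Z = x (Z.of_nat i - Z.of_nat m)%Z.
Proof.
  unfold win; rewrite readw_length; split; intros H i Hi; rewrite H by auto; rewrite nth_readw; auto.
Qed.

Lemma win_eq m w x : length w = S (2 * m) -> win m w x -> readw m x = w.
Proof.
  intros Hl Hw. apply nth_ext with false false. rewrite readw_length; auto.
  intros i Hi. rewrite readw_length in Hi. rewrite nth_readw by auto. apply Hw; lia.
Qed.

Lemma win_decr m x y : win (S m) (readw (S m) x) y -> win m (readw m x) y.
Proof.
  rewrite !win_readw. intros H i Hi. specialize (H (S i) ltac:(lia)).
  replace (Z.of_nat (S i) - Z.of_nat (S m))%Z with (Z.of_nat i - Z.of_nat m)%Z in H by lia. auto.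
Qed.

Lemma win_all x y : (forall m, win m (readw m x) y) -> y = x.
Proof.
  intro H. apply functional_extensionality; intro i.
  set (m := Z.to_nat (Z.abs i)). specialize (H m). rewrite win_readw in H.
  specialize (H (Z.to_nat (i + Z.of_nat m)) ltac:(unfold m; lia)).
  replace (Z.of_nat (Z.to_nat (i + Z.of_nat m)) - Z.of_nat m)%Z with i in H by (unfold m; lia). auto.
Qed.

Lemma conv_bounded (u : nat -> R) l : Un_cv u l -> exists B, forall n, u n <= B.
Proof.
  intro H. destruct (H 1) as [N HN]; [lra|].
  assert (Hf : forall K, exists M, forall n, (n <= K)%nat -> u n <= M).
  { induction K. exists (u 0%nat); intros n Hn; replace n with 0%nat by lia; lra.
    destruct IHK as [M HM]. exists (Rmax M (u (S K))). intros n Hn.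
    destruct (Nat.eq_dec n (S K)) as [->|]. apply Rmax_r. eapply Rle_trans; [apply HM; lia| apply Rmax_l]. }
  destruct (Hf N) as [M HM]. exists (Rmax M (l + 1)). intro n.
  destruct (Nat.le_gt_cases n N). eapply Rle_trans; [apply HM; auto| apply Rmax_l].
  assert (h := HN n ltac:(lia)). unfold R_dist in h. apply Rabs_def2 in h. eapply Rle_trans; [|apply Rmax_r]. lra.
Qed.

Theorem lemma5p1 (mu : (config -> Prop) -> R) :
  is_prob_measure mu ->
  translation_invariant mu ->
  (exists S : R, Un_cv (entropy_j mu) S) ->
  measurable periodic_configs /\ mu periodic_configs = 1.
Proof.
  intros Hmu HT [Sl HS]. split; [apply meas_periodic|].
  set (N := fun x => ~ periodic_configs x).
  assert (HNm : measurable N) by (apply meas_compl, meas_periodic).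
  assert (Hc1 := mu_compl mu periodic_configs Hmu meas_periodic). fold N in Hc1.
  enough (mu N = 0) by lra.
  assert (H0 := mu_ge0 mu N Hmu HNm).
  destruct (Rle_lt_or_eq_dec _ _ H0) as [Hpos|]; [exfalso|auto].
  destruct (conv_bounded _ _ HS) as [B HB].
  destruct (entropy_good mu N B Hmu HNm Hpos HB) as [c [Hc Hgood]].
  set (D := fun m x => c <= mu (fun y => win m (readw m x) y /\ N y)).
  assert (HWm : forall m w, measurable (fun y => win m w y /\ N y)) by (intros; apply meas_and; auto; apply meas_win).
  assert (HDm : forall m, measurable (D m)).
  { intro m. apply meas_ext with (fun x => exists w, In w (words (S (2 * m))%nat) /\ (c <= mu (fun y => win m w y /\ N y) /\ win m w x)).
    - apply meas_list; intro w; apply meas_prop_and, meas_win.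
    - intro x; unfold D; split.
      + intros [w [Hw [H1 H2]]]. rewrite (win_eq m w x (words_length _ _ Hw) H2). auto.
      + intro H. exists (readw m x). split. { pose proof (words_in (readw m x)) as Hw; rewrite readw_length in Hw; exact Hw. }
        split; auto. apply win_readw; auto. }
  assert (HDdecr : forall m x, D (S m) x -> D m x).
  { intros m x H. unfold D in *. eapply Rle_trans; [apply H|]. apply mu_mono; auto.
    intros y [h1 h2]; split; auto. apply win_decr; auto. }
  assert (HDc : forall m, c <= mu (fun x => D m x /\ N x)).
  { intro m. destruct (Hgood (2 * m)%nat) as [w [Hw Hcw]].
    unfold N in Hcw; rewrite <- (mu_win mu Hmu HT m w) in Hcw; fold N in Hcw. eapply Rle_trans; [apply Hcw|].
    apply mu_mono; auto. apply meas_and; auto.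
    intros y [h1 h2]; split; auto. unfold D. rewrite (win_eq m w y (words_length _ _ Hw) h1). auto. }
  assert (Hint := mu_cont_down mu (fun m x => D m x /\ N x) c Hmu
     ltac:(intro; apply meas_and; auto) ltac:(intros m x [h1 h2]; split; auto) HDc).
  destruct (mu_pos_nonempty mu (fun x => forall m, D m x /\ N x) Hmu ltac:(simpl in Hint; lra)) as [x0 Hx0]. simpl in Hx0.
  assert (HNx0 : N x0) by apply (Hx0 0%nat).
  assert (Hsing : c <= mu (fun y => y = x0)).
  { assert (h : c <= mu (fun y => forall m, win m (readw m x0) y /\ N y)).
    { apply (mu_cont_down mu (fun m y => win m (readw m x0) y /\ N y) c Hmu).
      - intro m; apply HWm.
      - intros m y [h1 h2]; split; auto; apply win_decr; auto.
      - intro m; apply (Hx0 m). }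
    rewrite (mu_ext mu _ (fun y => y = x0)) in h; auto.
    intro y; split.
    - intro H. apply win_all. intro m; apply H.
    - intros ->. intro m; split; auto. apply win_readw; auto. }
  set (A := fun (k : nat) (y : config) => forall i, y (i + Z.of_nat k)%Z = x0 i).
  assert (HAm : forall k, measurable (A k)).
  { intro k. apply meas_forall_Z with (A := fun i y => y (i + Z.of_nat k)%Z = x0 i). intro; apply meas_cyl. }
  assert (HAmu : forall k, mu (A k) = mu (fun y => y = x0)).
  { induction k.
    - apply mu_ext; intro y; unfold A; split.
      + intro H; apply functional_extensionality; intro i; rewrite <- H; f_equal; lia.
      + intros -> i; f_equal; lia.
    - rewrite <- IHk, <- (HT (A k)) by auto. apply mu_ext; intro y; unfold A, Defs.shift; split; intros H i; rewrite <- H; f_equal; lia. }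
  assert (Hdisj : forall m n y, m <> n -> A m y -> A n y -> False).
  { assert (Hlt : forall m n y, (m < n)%nat -> A m y -> A n y -> False).
    { intros m n y Hmn Hm Hn. apply HNx0. exists (Z.of_nat n - Z.of_nat m)%Z. split; [lia|].
      intro i. rewrite <- (Hm (i + (Z.of_nat n - Z.of_nat m))%Z), <- (Hn i). f_equal; lia. }
    intros m n y Hmn Hm Hn. destruct (Nat.lt_gt_cases m n) as [[h|h] _]; [lia| eauto| eauto]. }
  destruct Hmu as [_ [_ Hsum]].
  apply (inf_sum_ge_contra (fun k => mu (A k)) (mu (fun x => exists n, A n x)) c Hc); [intro k; rewrite HAmu; auto|].
  apply Hsum; auto.
Qed.
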